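(* Let $a\geq 2$ be an integer and $m\geq 1$. The number of pyramids of size $m$ made of pieces of length $a$ (with bottom piece covering the interval $]0,a[$) equals $\binom{am-1}{m-1}$.
   Context: Fix an integer $a\geq 2$. A piece is an open interval $]s,s+a[$ of the real line with $s\in\mathbb Z$; two pieces are concurrent iff their intervals intersect. A heap (in the sense of Viennot) is a finite configuration obtained by successively dropping pieces vertically towards the horizontal axis: each dropped piece comes to rest either on the axis or on top of the highest previously placed piece whose interval intersects its own; two dropping orders give the same heap iff they produce the same configuration of placed pieces. Equivalently, a heap is the finite poset of placed pieces ordered by the transitive closure of ''$\beta$ lies above $\alpha$ and their intervals intersect''. A heap is a pyramid if it has a unique bottom (minimal) piece, i.e. exactly one piece rests on the axis. The size $|p|$ of a pyramid $p$ is its number of pieces. When not otherwise specified, a pyramid is assumed to have its bottom piece covering the interval $]0,a[$. *)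

(* Defs.v *)
From HB Require Import structures.
From mathcomp Require Import all_boot all_order all_algebra.
From mathcomp Require Import finmap.
Set Implicit Arguments. Unset Strict Implicit. Unset Printing Implicit Defensive.
Import Order.TTheory GRing.Theory Num.Theory.
Local Open Scope fset_scope.

(* A piece is the open interval ]s, s+a[ with s : int; it is identified by s.
   Two pieces ]s,s+a[ and ]t,t+a[ intersect iff |s - t| < a. *)
Definition concurrent (a : nat) (s t : int) : bool := (`|s - t| < a%:Z)%R.

(* A placed piece is a pair (s, level); level 0 means resting on the axis. *)
Definition drop_level (a : nat) (c : seq (int * nat)) (s : int) : nat :=
  foldr (fun p acc => if concurrent a p.1 s then maxn p.2.+1 acc else acc) 0%N c.

Definition drop_piece (a : nat) (c : seq (int * nat)) (s : int) : seq (int * nat) :=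
  (s, drop_level a c s) :: c.

Definition build (a : nat) (l : seq int) : seq (int * nat) :=
  foldl (drop_piece a) [::] l.

Definition heap_of (a : nat) (l : seq int) : {fset (int * nat)} :=
  [fset x | x in build a l].

Definition is_heap (a : nat) (H : {fset (int * nat)}) : Prop :=
  exists l : seq int, heap_of a l = H.

Definition is_pyramid (a : nat) (H : {fset (int * nat)}) : Prop :=
  is_heap a H /\ [fset p in H | p.2 == 0%N] = [fset (0%Z, 0%N)].

(* Main.v *)
Set Warnings "-notation-overridden -ambiguous-paths -notation-incompatible-prefix".
Require Import Defs.
From HB Require Import structures.
From mathcomp Require Import all_boot all_order all_algebra.
From mathcomp Require Import finmap zify.
From Stdlib Require Import Relations ClassicalEpsilon.
Local Open Scope fset_scope.
Set Implicit Arguments. Unset Strict Implicit. Unset Printing Implicit Defensive.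
Import Order.TTheory GRing.Theory Num.Theory.
Set Warnings "-notation-overridden -ambiguous-paths -notation-incompatible-prefix".
Require Import Defs.
From HB Require Import structures.
From mathcomp Require Import all_boot all_order all_algebra.
From mathcomp Require Import finmap zify.
From Stdlib Require Import Relations ClassicalEpsilon.
Local Open Scope fset_scope.
Set Implicit Arguments. Unset Strict Implicit. Unset Printing Implicit Defensive.
Import Order.TTheory GRing.Theory Num.Theory.
Lemma conc_sym a s t : concurrent a s t = concurrent a t s.
Proof. by rewrite /concurrent distrC. Qed.

Lemma conc_refl a s : (0 < a)%N -> concurrent a s s.
Proof. by move=> ha; rewrite /concurrent subrr normr0 ltz_nat. Qed.

Lemma dl_gt a c s q : q \in c -> concurrent a q.1 s -> (q.2 < drop_level a c s)%N.
Proof.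
elim: c => //= p c IH; rewrite inE => /orP [/eqP->|qc] cq.
  by rewrite cq leq_max ltnSn.
case: ifP => _; last exact: IH.
by rewrite leq_max IH ?orbT.
Qed.

Lemma dl_cases a c s : drop_level a c s = 0%N \/
  exists2 q, q \in c & concurrent a q.1 s /\ drop_level a c s = q.2.+1.
Proof.
elim: c => [|p c IH] /=; first by left.
case: ifP => cp; last first.
  case: IH => [->|[q qc [cq ->]]]; first by left.
  by right; exists q; rewrite ?inE ?qc ?orbT.
right; case: (leqP (drop_level a c s) p.2.+1) => hle.
  exists p; rewrite ?inE ?eqxx //; split=> //; exact/maxn_idPl.
case: IH => [E|[q qc [cq E]]]; first by rewrite E in hle.
exists q; rewrite ?inE ?qc ?orbT //; split => //.
Qed.

Lemma dl_eq_mem a c c' s : c =i c' -> drop_level a c s = drop_level a c' s.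
Proof.
move=> E.
have key : forall c1 c2, c1 =i c2 -> (drop_level a c1 s <= drop_level a c2 s)%N.
  move=> c1 c2 E12; case: (dl_cases a c1 s) => [->|[q qc [cq ->]]] //.
  by apply: dl_gt => //; rewrite -E12.
by apply/eqP; rewrite eqn_leq !key.
Qed.

Lemma build_rcons a w s : build a (rcons w s) = drop_piece a (build a w) s.
Proof. by rewrite /build foldl_rcons. Qed.

Lemma build_cat a u v : build a (u ++ v) = foldl (drop_piece a) (build a u) v.
Proof. by rewrite /build foldl_cat. Qed.

Lemma foldl_eqmem a c c' v : c =i c' ->
  foldl (drop_piece a) c v =i foldl (drop_piece a) c' v.
Proof.
elim: v c c' => //= s v IH c c' E; apply: IH => x.
by rewrite /drop_piece !inE (dl_eq_mem _ _ E) E.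
Qed.

Lemma foldl_sub a c v p : p \in c -> p \in foldl (drop_piece a) c v.
Proof.
elim: v c => //= s v IH c pc; apply: IH; by rewrite inE pc orbT.
Qed.

Lemma mem_heap a w x : (x \in heap_of a w) = (x \in build a w).
Proof. by rewrite /heap_of inE. Qed.

Lemma heap_eqP a u v : heap_of a u = heap_of a v <-> build a u =i build a v.
Proof.
split=> [E x|E]; first by rewrite -!mem_heap E.
by apply/fsetP => x; rewrite !mem_heap E.
Qed.

Lemma build_cons_head a c s : (s, drop_level a c s) \notin c -> True. Proof. by []. Qed.

Lemma new_notin a c s : (0 < a)%N -> (s, drop_level a c s) \notin c.
Proof.
move=> ha; apply/negP => /dl_gt /(_ (conc_refl s ha)); by rewrite ltnn.
Qed.

Lemma build_uniq a w : (0 < a)%N -> uniq (build a w).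
Proof.
move=> ha; elim/last_ind: w => [|w s IH] //.
by rewrite build_rcons /drop_piece /= IH new_notin.
Qed.

Lemma size_build a w : size (build a w) = size w.
Proof.
elim/last_ind: w => [|w s IH] //.
by rewrite build_rcons /drop_piece /= IH size_rcons.
Qed.

Lemma card_heap a w : (0 < a)%N -> #|` heap_of a w| = size w.
Proof.
move=> ha; rewrite /heap_of card_in_imfset; last by move=> x y _ _.
set e := enum_finmem _.
have E : build a w =i e by move=> x; rewrite enum_finmemE.
rewrite -(size_build a w); apply/eqP.
by rewrite -(uniq_size_uniq (build_uniq w ha) E) enum_finmem_uniq.
Qed.

Lemma build_split a w p : p \in build a w ->
  exists x y, w = x ++ p.1 :: y /\ p.2 = drop_level a (build a x) p.1.
Proof.
elim/last_ind: w => [|w s IH] //.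
rewrite build_rcons /drop_piece inE => /orP [/eqP->|pw].
  by exists w, [::]; rewrite cats1.
case: (IH pw) => x [y [-> E]]; exists x, (rcons y s); split => //.
by rewrite rcons_cat.
Qed.

Lemma heap_rcons a w s :
  heap_of a (rcons w s) = (s, drop_level a (build a w) s) |` heap_of a w.
Proof.
by apply/fsetP => x; rewrite in_fset1U !mem_heap build_rcons /drop_piece inE.
Qed.

Inductive swap1 (a : nat) : seq int -> seq int -> Prop :=
  Swap1 u s t v : ~~ concurrent a s t -> swap1 a (u ++ s :: t :: v) (u ++ t :: s :: v).

Definition weq a := clos_refl_trans _ (swap1 a).

Lemma weq_refl a u : weq a u u. Proof. exact: rt_refl. Qed.
Lemma weq_trans a u v w : weq a u v -> weq a v w -> weq a u w.
Proof. exact: rt_trans. Qed.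
Lemma weq_sym a u v : weq a u v -> weq a v u.
Proof.
elim => [x y [u0 s t v0 h]| |]; last by move=> ? ? ? _ ? _ ?; apply: rt_trans; eauto.
  by apply: rt_step; constructor; rewrite conc_sym.
exact: rt_refl.
Qed.

Lemma weq_ctx a p q u v : weq a u v -> weq a (p ++ u ++ q) (p ++ v ++ q).
Proof.
elim => [x y [u0 s t v0 h]| x|]; last by move=> ? ? ? _ ? _ ?; apply: rt_trans; eauto.
  apply: rt_step.
  have -> : p ++ (u0 ++ s :: t :: v0) ++ q = (p ++ u0) ++ s :: t :: (v0 ++ q) by rewrite -!catA.
  have -> : p ++ (u0 ++ t :: s :: v0) ++ q = (p ++ u0) ++ t :: s :: (v0 ++ q) by rewrite -!catA.
  by constructor.
exact: rt_refl.
Qed.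

Lemma weq_rev a u v : weq a u v -> weq a (rev u) (rev v).
Proof.
elim => [x y [u0 s t v0 h]| x|]; last by move=> ? ? ? _ ? _ ?; apply: rt_trans; eauto.
  apply: rt_step; rewrite !rev_cat !rev_cons -!cats1 -!catA /=.
  by constructor; rewrite conc_sym.
exact: rt_refl.
Qed.

Lemma weq_build a u v : weq a u v -> build a u =i build a v.
Proof.
elim => [x y [u0 s t v0 h]| x|]; last first.
- by move=> ? ? ? _ E1 _ E2 z; rewrite E1 E2.
- by [].
rewrite !build_cat /=; apply: foldl_eqmem => z.
have h' : concurrent a t s = false by rewrite conc_sym; apply/negbTE.
rewrite /drop_piece /= (negbTE h) h' !inE.
by rewrite orbCA.
Qed.

Lemma weq_heap a u v : weq a u v -> heap_of a u = heap_of a v.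
Proof. by move=> /weq_build /heap_eqP. Qed.

Lemma build_cons_rcons a x t y :
  build a (x ++ t :: y) = foldl (drop_piece a) (build a (rcons x t)) y.
Proof. by rewrite -cat_rcons build_cat. Qed.

Lemma mem_build_rcons a x t : (t, drop_level a (build a x) t) \in build a (rcons x t).
Proof. by rewrite build_rcons /drop_piece inE eqxx. Qed.

Lemma mem_build_mid a x t y : (t, drop_level a (build a x) t) \in build a (x ++ t :: y).
Proof. by rewrite build_cons_rcons; apply: foldl_sub; apply: mem_build_rcons. Qed.

Lemma letter_piece a w r : r \in w -> exists l, (r, l) \in build a w.
Proof.
case/splitPr => x y; exists (drop_level a (build a x) r).
exact: mem_build_mid.
Qed.

Lemma later_above a x t y r : r \in y -> concurrent a r t ->
  exists2 p, p \in build a (x ++ t :: y) &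
    concurrent a p.1 t /\ (drop_level a (build a x) t < p.2)%N.
Proof.
case/splitPr: y / => y1 y2 crt.
exists (r, drop_level a (build a (x ++ t :: y1)) r).
  have -> : x ++ t :: (y1 ++ r :: y2) = (x ++ t :: y1) ++ r :: y2 by rewrite -catA.
  exact: mem_build_mid.
split=> //=.
have := mem_build_mid a x t y1.
by move=> /dl_gt; apply; rewrite /= conc_sym.
Qed.

Lemma move_end a x t y : all (fun r => ~~ concurrent a r t) y ->
  weq a (x ++ t :: y) (rcons (x ++ y) t).
Proof.
elim: y x => [|r y IH] x /=; first by move=> _; rewrite cats0 cats1; apply: weq_refl.
case/andP => nrt hy.
apply: (@weq_trans _ _ ((rcons x r) ++ t :: y)).
  rewrite -cats1 -catA /=; apply: rt_step; constructor; by rewrite conc_sym.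
by have := IH (rcons x r) hy; rewrite !cat_rcons.
Qed.

Lemma move_front a x s : all (fun r => ~~ concurrent a r s) x ->
  weq a (rcons x s) (s :: x).
Proof.
elim: x => [|r x IH] /=; first by move=> _; exact: weq_refl.
case/andP => nrs hx.
apply: (@weq_trans _ _ (r :: s :: x)).
  by have := weq_ctx [:: r] [::] (IH hx); rewrite /= !cats0.
exact: (rt_step _ _ _ _ (@Swap1 a [::] r s x nrs)).
Qed.

Lemma top a w t d : (0 < a)%N -> (t, d) \in build a w ->
  (forall r, r \in build a w -> concurrent a r.1 t -> (r.2 <= d)%N) ->
  exists w', weq a w (rcons w' t) /\ d = drop_level a (build a w') t.
Proof.
move=> ha hin; have [x [y [Ew Ed]]] := build_split hin; rewrite /= in Ed.
rewrite Ew in hin * => hmax.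
have hall : all (fun r => ~~ concurrent a r t) y.
  apply/allP => r ry; apply/negP => crt.
  case: (later_above x ry crt) => p pin [cp lt].
  by have := hmax p pin cp; rewrite leqNgt Ed lt.
have W : weq a (x ++ t :: y) (rcons (x ++ y) t) by apply: move_end.
exists (x ++ y); split => //.
have E := weq_build W.
set d' := drop_level a (build a (x ++ y)) t.
have : (t, d) \in build a (rcons (x ++ y) t) by rewrite -E.
rewrite build_rcons /drop_piece inE => /orP [/eqP [->] //|].
move=> /dl_gt /(_ (conc_refl t ha)) /= hlt.
have : (t, d') \in build a (x ++ t :: y) by rewrite E build_rcons /drop_piece inE eqxx.
by move=> /hmax /(_ (conc_refl t ha)) /=; rewrite leqNgt hlt.
Qed.

Lemma top_conv a w w' t : weq a w (rcons w' t) ->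
  (t, drop_level a (build a w') t) \in build a w /\
  (forall r, r \in build a w -> concurrent a r.1 t ->
     (r.2 <= drop_level a (build a w') t)%N).
Proof.
move=> /weq_build E; split; first by rewrite E mem_build_rcons.
move=> r; rewrite E build_rcons /drop_piece inE => /orP [/eqP -> //|].
by move=> rin /(dl_gt rin) /ltnW.
Qed.

Lemma heap_weq a u v : (0 < a)%N -> build a u =i build a v -> weq a u v.
Proof.
move=> ha; elim/last_ind: u v => [|u t IH] v E.
  case/lastP: v E => [|v s] E; first exact: weq_refl.
  by have := E (s, drop_level a (build a v) s); rewrite mem_build_rcons.
set d := drop_level a (build a u) t.
have hin : (t, d) \in build a v by rewrite -E mem_build_rcons.
have [v' [Wv Ed]] : exists w', weq a v (rcons w' t) /\ d = drop_level a (build a w') t.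
  apply: top => // r; rewrite -E build_rcons /drop_piece inE => /orP [/eqP -> //|].
  by move=> rin /(dl_gt rin) /ltnW.
have Eu : build a u =i build a v'.
  move=> z; have := E z; rewrite (weq_build Wv) !build_rcons /drop_piece !inE -Ed.
  have n1 := new_notin (build a u) t ha; have n2 := new_notin (build a v') t ha.
  rewrite -/d -Ed in n2.
  case: (z =P (t, d)) => [->|_] //=.
  by rewrite (negbTE n1) (negbTE n2).
apply: (@weq_trans _ _ (rcons v' t)); last exact: weq_sym.
by have := weq_ctx [::] [:: t] (IH v' Eu); rewrite /= !cats1.
Qed.

Lemma heap_of_eq_weq a u v : (0 < a)%N -> heap_of a u = heap_of a v -> weq a u v.
Proof. by move=> ha /heap_eqP; apply: heap_weq. Qed.

Lemma min_weq a w s : (s, 0%N) \in build a w -> exists w', weq a w (s :: w').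
Proof.
elim/last_ind: w => [|w t IH] //.
rewrite build_rcons /drop_piece inE => /orP [/eqP [Es Ed]|hin].
  exists w; rewrite -Es; apply: move_front; apply/allP => r rw; apply/negP => crs.
  case: (letter_piece a rw) => l hl.
  by have := dl_gt hl crs; rewrite Es -Ed.
case: (IH hin) => w' W; exists (rcons w' t).
by have := weq_ctx [::] [:: t] W; rewrite /= !cats1.
Qed.

Lemma min_conv a w s w' : weq a w (s :: w') -> (s, 0%N) \in build a w.
Proof.
move=> /weq_build ->; rewrite /build /=.
by apply: foldl_sub; rewrite inE.
Qed.

Lemma build_levels a w p q : p \in build a w -> q \in build a w ->
  concurrent a p.1 q.1 -> p.2 = q.2 -> p = q.
Proof.
elim/last_ind: w => [|w s IH] //; rewrite build_rcons /drop_piece !inE.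
case/orP => [/eqP->|hp]; case/orP => [/eqP->|hq] //= c e.
- by rewrite conc_sym in c; have := dl_gt hq c; rewrite -e ltnn.
- by have := dl_gt hp c; rewrite e ltnn.
- exact: IH.
Qed.

Definition card_is (P : {fset (int * nat)} -> Prop) (k : nat) :=
  exists S : {fset {fset (int * nat)}}, (forall H, H \in S <-> P H) /\ #|` S| = k.

Lemma ci_ext P Q k : (forall H, P H <-> Q H) -> card_is P k -> card_is Q k.
Proof. by move=> E [S [hS cS]]; exists S; split => // H; rewrite hS. Qed.

Lemma ci_empty P : (forall H, ~ P H) -> card_is P 0.
Proof. by move=> hP; exists fset0; split => // H; rewrite inE; split => // /hP. Qed.

Lemma ci_single : card_is (fun H => H = fset0) 1.
Proof.
exists [fset fset0]; split; last exact: cardfs1.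
by move=> H; rewrite inE; split => [/eqP|->].
Qed.

Lemma ci_union P Q k1 k2 : card_is P k1 -> card_is Q k2 ->
  (forall H, P H -> Q H -> False) -> card_is (fun H => P H \/ Q H) (k1 + k2).
Proof.
move=> [S1 [h1 c1]] [S2 [h2 c2]] hd; exists (S1 `|` S2); split.
  move=> H; rewrite in_fsetU; split.
    by case/orP => [/h1|/h2]; [left|right].
  by case => [/h1|/h2] ->; rewrite ?orbT.
have I0 : S1 `&` S2 = fset0.
  apply/fsetP => H; rewrite in_fsetI inE; apply/negP => /andP [/h1 ? /h2 ?].
  exact: (hd H).
by have := cardfsUI S1 S2; rewrite I0 cardfs0 addn0 c1 c2.
Qed.

Lemma ci_img P Q k (f : {fset (int * nat)} -> {fset (int * nat)}) :
  card_is P k -> (forall x y, P x -> P y -> f x = f y -> x = y) ->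
  (forall H, Q H <-> exists x, P x /\ H = f x) -> card_is Q k.
Proof.
move=> [S [hS cS]] finj hQ; exists (f @` S); split.
  move=> H; rewrite hQ; split.
    by case/imfsetP => x /= /hS xS ->; exists x.
  by case=> x [/hS xS ->]; apply/imfsetP; exists x.
rewrite card_in_imfset // => x y /hS xS /hS yS; exact: finj.
Qed.

Definition maxl a (H : {fset (int * nat)}) q :=
  q \in H /\ forall r, r \in H -> concurrent a r.1 q.1 -> (r.2 <= q.2)%N.

Definition addt a (F : {fset (int * nat)}) s : {fset (int * nat)} :=
  (s, drop_level a F s) |` F.

Lemma addt_heap a w s : addt a (heap_of a w) s = heap_of a (rcons w s).
Proof.
rewrite heap_rcons /addt; congr (_ |` _); congr (_, _).
by apply: dl_eq_mem => x; rewrite mem_heap.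
Qed.

Lemma dlF a w s : drop_level a (heap_of a w) s = drop_level a (build a w) s.
Proof. by apply: dl_eq_mem => x; rewrite mem_heap. Qed.

Lemma maxl_heap a w q : (0 < a)%N -> maxl a (heap_of a w) q ->
  exists w', heap_of a w = addt a (heap_of a w') q.1 /\
             q = (q.1, drop_level a (heap_of a w') q.1).
Proof.
case: q => t d ha [hin hmax]; rewrite mem_heap in hin.
have hmax' : forall r, r \in build a w -> concurrent a r.1 t -> (r.2 <= d)%N.
  by move=> r hr; apply: hmax; rewrite mem_heap.
have [w' [W E]] := top ha hin hmax'.
exists w'; rewrite addt_heap dlF -E; split => //.
exact: weq_heap.
Qed.

Lemma addt_maxl a F s : (0 < a)%N -> is_heap a F -> maxl a (addt a F s) (s, drop_level a F s).
Proof.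
move=> ha [w <-]; split; first by rewrite /addt fset1U1.
move=> r; rewrite /addt in_fset1U => /orP [/eqP -> //|rin] /= c.
by apply: ltnW; apply: dl_gt => //; rewrite -mem_heap.
Qed.

Lemma addt_notin a F s : (0 < a)%N -> (s, drop_level a F s) \notin F.
Proof. by move=> ha; apply: new_notin. Qed.

Lemma heap_nil a : heap_of a [::] = fset0.
Proof. by apply/fsetP => x; rewrite mem_heap. Qed.

Lemma heap_is_heap a w : is_heap a (heap_of a w). Proof. by exists w. Qed.

Lemma addt_is_heap a F s : is_heap a F -> is_heap a (addt a F s).
Proof. by case=> w <-; rewrite addt_heap; apply: heap_is_heap. Qed.

Lemma card_addt a F s : (0 < a)%N -> #|` addt a F s| = #|` F|.+1.
Proof. by move=> ha; rewrite /addt cardfsU1 addt_notin. Qed.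

Lemma heap_nonempty_max a H : (0 < a)%N -> is_heap a H -> H != fset0 ->
  exists q, maxl a H q.
Proof.
move=> ha [w <-]; case/lastP: w => [|w s]; first by rewrite heap_nil eqxx.
move=> _; exists (s, drop_level a (heap_of a w) s).
by rewrite -addt_heap; apply: addt_maxl => //; apply: heap_is_heap.
Qed.

Lemma heap_levels a H p q : is_heap a H -> p \in H -> q \in H ->
  concurrent a p.1 q.1 -> p.2 = q.2 -> p = q.
Proof. by case=> w <-; rewrite !mem_heap; apply: build_levels. Qed.

Lemma addt_inj a F F' s : (0 < a)%N -> addt a F s = addt a F' s -> F = F'.
Proof.
move=> ha E.
have n1 := addt_notin F s ha; have n2 := addt_notin F' s ha.
suff e : drop_level a F s = drop_level a F' s.
  by rewrite -(fsetU1K n1) -(fsetU1K n2) -/(addt a F s) E /addt e.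
have h1 : (s, drop_level a F s) \in addt a F' s by rewrite -E fset1U1.
have h2 : (s, drop_level a F' s) \in addt a F s by rewrite E fset1U1.
rewrite /addt !in_fset1U in h1 h2.
case: eqP h1 => [[]//|ne1] /= h1; case: eqP h2 => [[]//|ne2] /= h2.
have := dl_gt h1 (conc_refl s ha); have := dl_gt h2 (conc_refl s ha) => /= l1 l2.
by have := ltn_trans l1 l2; rewrite ltnn.
Qed.

Definition Wp a (lo hi : int) m (H : {fset (int * nat)}) :=
  is_heap a H /\ #|` H| = m /\
  forall q, maxl a H q -> (lo <= q.1)%R /\ (q.1 < hi)%R.

Lemma rec_top a (lo hi L : int) m k : (0 < a)%N ->
  (L <= lo)%R -> (L <= hi - a%:Z)%R ->
  (forall x : int, (L <= x)%R -> (x <= hi - 1 - a%:Z)%R -> (lo <= x)%R) ->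
  (lo < hi)%R ->
  card_is (Wp a L (hi - 1 + a%:Z)%R m) k ->
  card_is (fun H => Wp a lo hi m.+1 H /\ exists q, maxl a H q /\ q.1 = (hi - 1)%R) k.
Proof.
move=> ha h1 h2 h3 h4 hc.
apply: (ci_img (f := fun F => addt a F (hi - 1)) hc).
  by move=> x y _ _; apply: addt_inj.
move=> H; split.
  move=> [[hH [cH wH]] [q [mq eq]]].
  have [w Hw] := hH.
  have mq' := mq; rewrite -Hw in mq'.
  have [w' [E Eq]] := maxl_heap ha mq'.
  set F := heap_of a w' in E Eq.
  exists F; split; last by rewrite -Hw E eq.
  split; first exact: heap_is_heap.
  split.
    by apply/eqP; rewrite -eqSS -cH -Hw E card_addt.
  move=> r [rin rmax].
  case cr: (concurrent a r.1 q.1).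
    move: cr; rewrite eq /concurrent => cr; lia.
  have mr : maxl a H r.
    split; first by rewrite -Hw E /addt fset1Ur.
    move=> r'; rewrite -Hw E /addt in_fset1U => /orP [/eqP -> /= c|].
      by rewrite conc_sym c in cr.
    exact: rmax.
  have [l1 l2] := wH r mr.
  split; lia.
move=> [F [[hF [cF wF]] ->]].
split; last by exists ((hi - 1)%R, drop_level a F (hi - 1)%R); split => //; exact: addt_maxl.
split; first exact: addt_is_heap.
split; first by rewrite card_addt // cF.
move=> q [qin qmax].
move: qin; rewrite /addt in_fset1U => /orP [/eqP -> /=|qin]; first by split; lia.
have ncq : ~~ concurrent a q.1 (hi - 1)%R.
  apply/negP => c.
  have := qmax ((hi - 1)%R, drop_level a F (hi - 1)%R) (fset1U1 _ _).
  rewrite /= conc_sym c => /(_ isT).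
  by rewrite leqNgt (dl_gt qin c).
have mq : maxl a F q.
  split => // r rin c; apply: qmax => //; exact: fset1Ur.
have [l1 l2] := wF q mq.
move: ncq; rewrite /concurrent => ncq.
have hq : (q.1 <= hi - 1 - a%:Z)%R by lia.
have := h3 _ l1 hq; split => //; lia.
Qed.

Lemma W_split a lo hi m H : Wp a lo hi m H <->
  Wp a lo (hi - 1)%R m H \/ (Wp a lo hi m H /\ exists q, maxl a H q /\ q.1 = (hi - 1)%R).
Proof.
split; last first.
  case => [[hH [cH wH]]|[]//]; split => //; split => // q /wH [l1 l2]; split; lia.
move=> hW; case: (Classical_Prop.classic (exists q, maxl a H q /\ q.1 = (hi - 1)%R)) => ex.
  by right.
left; case: hW => hH [cH wH]; split => //; split => // q mq.
have [l1 l2] := wH q mq; split => //.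
have : q.1 <> (hi - 1)%R by move=> e; apply: ex; exists q.
lia.
Qed.

Lemma W_disj a lo hi m H : Wp a lo (hi - 1)%R m H ->
  (Wp a lo hi m H /\ exists q, maxl a H q /\ q.1 = (hi - 1)%R) -> False.
Proof.
move=> [_ [_ wH]] [_ [q [mq e]]]; have [_ l2] := wH q mq; lia.
Qed.

Lemma W_nonempty a lo hi m H : (0 < a)%N -> Wp a lo hi m.+1 H -> exists q, maxl a H q.
Proof.
move=> ha [hH [cH _]]; apply: heap_nonempty_max => //.
by rewrite -cardfs_gt0 cH.
Qed.

Lemma W_empty a lo m H : (0 < a)%N -> ~ Wp a lo lo m.+1 H.
Proof.
move=> ha hW; have [q mq] := W_nonempty ha hW.
case: hW => _ [_ wH]; have [l1 l2] := wH q mq; lia.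
Qed.

Lemma W0 a lo hi H : Wp a lo hi 0 H <-> H = fset0.
Proof.
split; first by case=> _ [/cardfs0_eq -> _].
move=> ->; split; first by exists [::]; exact: heap_nil.
by split; [exact: cardfs0| move=> q [] ].
Qed.

Lemma W_base a lo m H : (1 < a)%N ->
  Wp a lo (lo + (a - 1)%:Z)%R m.+1 H <->
  exists j, (j < a - 1)%N /\ Wp a (lo + j%:Z)%R (lo + j%:Z + 1)%R m.+1 H.
Proof.
move=> ha; have ha0 : (0 < a)%N by lia.
split; last first.
  move=> [j [hj [hH [cH wH]]]]; split => //; split => // q /wH [l1 l2]; split; lia.
move=> hW; have [q mq] := W_nonempty ha0 hW.
case: hW => hH [cH wH].
have [lq1 lq2] := wH q mq.
exists `|q.1 - lo|%N; split; first by lia.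
split => //; split => // r mr.
have [lr1 lr2] := wH r mr.
suff -> : r = q by split; lia.
case: mr => rin rmax; case: mq => qin qmax.
have c : concurrent a r.1 q.1 by rewrite /concurrent; lia.
apply: (heap_levels hH rin qin c); apply/eqP; rewrite eqn_leq.
rewrite (qmax r rin c) rmax //; by rewrite conc_sym.
Qed.

Lemma ci_sum a lo m c k : (0 < a)%N ->
  (forall j, card_is (Wp a (lo + j%:Z)%R (lo + j%:Z + 1)%R m.+1) c) ->
  card_is (fun H => exists j, (j < k)%N /\ Wp a (lo + j%:Z)%R (lo + j%:Z + 1)%R m.+1 H) (k * c).
Proof.
move=> ha hc; elim: k => [|k IH].
  by apply: ci_empty => H [j [] ].
rewrite mulSn addnC.
apply: (ci_ext (P := fun H => (exists j, (j < k)%N /\ Wp a (lo + j%:Z)%R (lo + j%:Z + 1)%R m.+1 H)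
                   \/ Wp a (lo + k%:Z)%R (lo + k%:Z + 1)%R m.+1 H)).
  move=> H; split.
    by case => [[j [hj hw]]|hw]; [exists j; split => //; lia| exists k].
  move=> [j [hj hw]]; case: (ltnP j k) => hjk; first by left; exists j.
  by right; have -> : k = j by lia.
apply: ci_union => //.
move=> H [j [hj hw1]] hw2.
have [q mq] := W_nonempty ha hw1.
case: hw1 => _ [_ w1]; case: hw2 => _ [_ w2].
have [l1 l2] := w1 q mq; have [l3 l4] := w2 q mq; lia.
Qed.

Lemma ar_base a m : (1 < a)%N ->
  ((a - 1) * 'C(a * m.-1 + (2 * a - 1), m) = 'C(a * m + (a - 1), m.+1))%N.
Proof.
move=> ha; case: m => [|m].
  by rewrite bin0 muln1 muln0 add0n bin1.
rewrite /=.
set N := (a * m + (2 * a - 1))%N.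
have eN : (a * m.+1 + (a - 1))%N = N by rewrite /N; lia.
rewrite eN.
have E := mul_bin_left N m.+1.
have e2 : (N - m.+1 = (a - 1) * m.+2)%N by rewrite /N; nia.
rewrite e2 in E.
apply/eqP; rewrite -(eqn_pmul2l (ltn0Sn m.+1)) E; apply/eqP; nia.
Qed.

Lemma W_count a m : (1 < a)%N -> forall n (lo : int), (a - 1 <= n)%N ->
  card_is (Wp a lo (lo + n%:Z)%R m) 'C(a * m.-1 + n, m).
Proof.
move=> ha; have ha0 : (0 < a)%N by lia.
elim: m => [|m IHm] n lo hn.
  rewrite bin0; apply: (ci_ext (P := fun H => H = fset0)); last exact: ci_single.
  by move=> H; split => [->|/W0 //]; apply/W0.
have key : forall k (lo' : int),
    card_is (Wp a lo' (lo' + (a - 1 + k)%:Z)%R m.+1) 'C(a * m + (a - 1 + k), m.+1).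
  elim => [|k IHk] lo'.
    rewrite addn0 -ar_base //.
    apply: (ci_ext (P := fun H => exists j, (j < a - 1)%N /\
              Wp a (lo' + j%:Z)%R (lo' + j%:Z + 1)%R m.+1 H)).
      by move=> H; split => [/W_base|]; [|move/W_base]; apply.
    apply: ci_sum => // j.
    set b := (lo' + j%:Z)%R.
    apply: (ci_ext (P := fun H => Wp a b (b + 1 - 1)%R m.+1 H \/
              (Wp a b (b + 1)%R m.+1 H /\ exists q, maxl a H q /\ q.1 = (b + 1 - 1)%R))).
      by move=> H; split; move/W_split.
    rewrite -(add0n 'C(_, _)); apply: ci_union; last by move=> H; apply: W_disj.
      by apply: ci_empty => H; rewrite addrK; exact: W_empty.
    apply: (@rec_top _ _ _ (b + 1 - a%:Z)%R) => //; try lia.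
    have -> : (b + 1 - 1 + a%:Z = (b + 1 - a%:Z) + (2 * a - 1)%:Z)%R by lia.
    by apply: IHm; lia.
  set hi := (lo' + (a - 1 + k.+1)%:Z)%R.
  have ehi : (hi - 1 = lo' + (a - 1 + k)%:Z)%R by rewrite /hi; lia.
  apply: (ci_ext (P := fun H => Wp a lo' (hi - 1)%R m.+1 H \/
              (Wp a lo' hi m.+1 H /\ exists q, maxl a H q /\ q.1 = (hi - 1)%R))).
    by move=> H; split; move/W_split.
  have -> : 'C(a * m + (a - 1 + k.+1), m.+1) =
            ('C(a * m + (a - 1 + k), m.+1) + 'C(a * m.-1 + (a - 1 + k + a), m))%N.
    rewrite !addnS binS; congr (_ + _)%N.
    by case: m {IHm IHk} => [|m] /=; [rewrite !bin0 | congr 'C(_, _); lia].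
  apply: ci_union; last by move=> H; apply: W_disj.
    by rewrite ehi; apply: IHk.
  apply: (@rec_top _ _ _ lo') => //; try (rewrite /hi; lia).
  have -> : (hi - 1 + a%:Z = lo' + (a - 1 + k + a)%:Z)%R by rewrite /hi; lia.
  by apply: IHm; lia.
have := key (n - (a - 1))%N lo.
by have -> : (a - 1 + (n - (a - 1)) = n)%N by lia.
Qed.

Definition wordof a (H : {fset (int * nat)}) : seq int :=
  epsilon (inhabits [::]) (fun w => heap_of a w = H).

Definition flip a H := heap_of a (rev (wordof a H)).

Lemma wordofP a H : is_heap a H -> heap_of a (wordof a H) = H.
Proof. by move=> hH; rewrite /wordof; apply: (epsilon_spec (inhabits [::]) (fun w => heap_of a w = H)). Qed.

Lemma flip_heap a H : is_heap a (flip a H).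
Proof. exact: heap_is_heap. Qed.

Lemma flipK a H : (0 < a)%N -> is_heap a H -> flip a (flip a H) = H.
Proof.
move=> ha hH; rewrite /flip.
have W := heap_of_eq_weq ha (wordofP (heap_is_heap a (rev (wordof a H)))).
have := weq_heap (weq_rev W); rewrite revK => ->.
exact: wordofP.
Qed.

Lemma flip_card a H : (0 < a)%N -> is_heap a H -> #|` flip a H| = #|` H|.
Proof.
move=> ha hH; rewrite /flip (card_heap _ ha) size_rev -(card_heap _ ha).
by rewrite wordofP.
Qed.

Lemma flip_min a H s : (0 < a)%N -> is_heap a H ->
  ((s, 0%N) \in H <-> exists d, maxl a (flip a H) (s, d)).
Proof.
move=> ha hH; rewrite -{1}(wordofP hH) /flip; set w := wordof a H.
split.
  rewrite mem_heap => /min_weq [w' W].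
  have W' : weq a (rev w) (rcons (rev w') s) by rewrite -rev_cons; apply: weq_rev.
  have [h1 h2] := top_conv W'.
  exists (drop_level a (build a (rev w')) s); split; first by rewrite mem_heap.
  by move=> r; rewrite mem_heap; apply: h2.
move=> [d md]; have [w'' [E _]] := maxl_heap ha md.
rewrite addt_heap /= in E.
have W := weq_rev (heap_of_eq_weq ha E).
rewrite revK rev_rcons in W.
by rewrite mem_heap; apply: min_conv W.
Qed.

Lemma pyr_iff a H : is_pyramid a H <->
  is_heap a H /\ (0%Z, 0%N) \in H /\ forall p, p \in H -> p.2 = 0%N -> p = (0%Z, 0%N).
Proof.
split.
  move=> [hH E]; split => //.
  have hE : forall p, (p \in H) && (p.2 == 0%N) = (p == (0%Z, 0%N)).
    by move=> p; have := congr1 (fun S => p \in S) E; rewrite /= !inE.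
  split; first by have := hE (0%Z, 0%N); rewrite eqxx => /andP [].
  by move=> p pin p0; apply/eqP; rewrite -hE pin p0 eqxx.
move=> [hH [h0 hp]]; split => //; apply/fsetP => p; rewrite !inE.
apply/andP/eqP => [[pin /eqP p0]|->]; first exact: hp.
by [].
Qed.

Lemma heap_has_min a H : is_heap a H -> H != fset0 -> exists s, (s, 0%N) \in H.
Proof.
case=> w <-; case: w => [|s w]; first by rewrite heap_nil eqxx.
move=> _; exists s; rewrite mem_heap; apply: (@min_conv _ _ _ w); exact: weq_refl.
Qed.

Lemma pyr_count a m : (1 < a)%N -> (1 <= m)%N ->
  card_is (fun H => is_pyramid a H /\ #|` H| = m) 'C(a * m - 1, m - 1).
Proof.
move=> ha hm; have ha0 : (0 < a)%N by lia.
case: m hm => [//|m] _.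
apply: (ci_img (P := Wp a 0 1 m.+1) (f := flip a)).
- apply: (ci_ext (P := fun H => Wp a 0 (1 - 1)%R m.+1 H \/
              (Wp a 0 1 m.+1 H /\ exists q, maxl a H q /\ q.1 = (1 - 1)%R))).
    by move=> H; split; move/W_split.
  rewrite -(add0n 'C(_, _)); apply: ci_union; last by move=> H; apply: W_disj.
    by apply: ci_empty => H; rewrite subrr; exact: W_empty.
  apply: (@rec_top _ _ _ (1 - a%:Z)%R) => //; try lia.
  have -> : (1 - 1 + a%:Z = (1 - a%:Z) + (2 * a - 1)%:Z)%R by lia.
  have -> : ('C(a * m.+1 - 1, m.+1 - 1) = 'C(a * m.-1 + (2 * a - 1), m))%N.
    by case: m => [|m] /=; [rewrite !bin0 | congr 'C(_, _); lia].
  by apply: W_count; lia.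
- by move=> x y [hx _] [hy _] E; rewrite -(flipK ha0 hx) -(flipK ha0 hy) E.
move=> H; split.
  move=> [/pyr_iff [hH [h0 hp]] cH].
  exists (flip a H); split; last by rewrite flipK.
  split; first exact: flip_heap.
  split; first by rewrite flip_card.
  case=> [s d] md; have : (s, 0%N) \in H by apply/(flip_min _ ha0 hH); exists d.
  by move=> /hp /(_ erefl) [->].
move=> [G [[hG [cG wG]] ->]].
have hF := flip_heap a G.
have Hs : forall s, (s, 0%N) \in flip a G -> s = 0%Z.
  move=> s /(flip_min _ ha0 hF) [d]; rewrite flipK // => /wG [/= l1 l2]; lia.
split; last by rewrite flip_card.
apply/pyr_iff; split => //; split.
  have : flip a G != fset0 by rewrite -cardfs_gt0 flip_card // cG.
  by case/(heap_has_min hF) => s hs; rewrite -(Hs s hs).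
by case=> s l /= hin l0; rewrite l0 in hin *; rewrite (Hs s hin).
Qed.

Unset Implicit Arguments.

Theorem theorem1 (a m : nat) (ha : (2 <= a)%N) (hm : (1 <= m)%N) :
  exists S : {fset {fset (int * nat)}},
    (forall H : {fset (int * nat)}, H \in S <-> (is_pyramid a H /\ #|` H| = m)) /\
    #|` S| = 'C(a * m - 1, m - 1).
Proof. exact: pyr_count. Qed.
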